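(* For every integer $q'\ge2$, the network $\mathcal{N}_2$ (with parameter $q'$) has a $3$-dimensional VLNC solution over every finite field.
   Context: Vector linear network coding: each source $v$ generates $x_v\in F^d$; an edge out of a source $v$ carries $Ax_v$ for a $d\times d$ matrix $A$ over $F$; an edge out of an intermediate node carries $\sum A_{e',e}y_{e'}$ over the edges $e'$ entering that node; a terminal computes vectors $\sum B_ey_e$ over its incoming edges; a $d$-dimensional VLNC solution over $F$ is such a code with which every terminal computes each demanded message for all message choices. The Char-$q$-$s$ network (integer $q\ge2$): sources $s,x_1,\dots,x_{q+2}$; intermediate nodes $m_1,\dots,m_{q+3},n_1,\dots,n_{q+3}$; terminals $r_1,\dots,r_{q+3}$; edges: $(x_1,m_i)$ for $1\le i\le q+1$; $(s,m_1)$ and $(s,m_i)$ for $4\le i\le q+3$; $(x_i,m_j)$ for $2\le i,j\le q+2$, $i\ne j$; $(x_i,m_{q+3})$ for $1\le i\le q+2$; $e_i=(m_i,n_i)$ for $1\le i\le q+3$; $(n_i,r_i)$ for $1\le i\le q+2$; $(n_{q+3},r_i)$ and $(n_i,r_{q+3})$ for $1\le i\le q+2$; $(x_i,r_1)$ for $2\le i\le q+1$; $(x_1,r_{q+2})$; $(s,r_2)$; $(s,r_3)$. Demands: $r_1$ demands $x_{q+2}$; $r_i$ demands $x_i$ for $2\le i\le q+2$; $r_{q+3}$ demands $x_1$; no terminal demands $s$. The generalized M-network $\mathcal{M}_3$: sources in three groups $G_1=(\bar a,\bar b,\bar c)$, $G_2=(\bar r,\bar s,\bar w)$, $G_3=(\bar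 x,\bar y,\bar z)$; intermediate nodes $\bar u_1,\bar u_2,\bar u_3,\bar v_1,\dots,\bar v_5$; edges from each source of $G_i$ to $\bar u_i$, edges $(\bar u_i,\bar v_i),(\bar u_i,\bar v_4),(\bar u_i,\bar v_5)$ for $i=1,2,3$, and $(\bar v_i,\bar t_j)$ for $1\le i\le5$, $1\le j\le27$; terminals $\bar t_1,\dots,\bar t_{27}$, where $\bar t_j$ demands the $j$-th triple in the lexicographic order of $G_1\times G_2\times G_3$ (e.g. $\bar t_1$: $\bar a,\bar r,\bar x$; $\bar t_2$: $\bar a,\bar r,\bar y$; $\bar t_4$: $\bar a,\bar s,\bar x$; $\bar t_{25}$: $\bar c,\bar w,\bar x$; $\bar t_{27}$: $\bar c,\bar w,\bar z$). The network $\mathcal{N}_2$ (integer $q'\ge2$) is obtained from the disjoint union of $\mathcal{M}_3$ and a copy of the Char-$q'$-$s$ network (nodes renamed $\bar m_i,\bar n_i$, terminals $\rho_i$, edges $\bar e_i=(\bar m_i,\bar n_i)$, sources $x_i$ renamed $\bar x_i$ for $2\le i\le q'+2$) by identifying $x_1$ with $\bar a$ and $s$ with $\bar x$ (so $\rho_{q'+3}$ demands $\bar a$), and adding the edges: $(\bar w,\bar t_j)$ for $j\in\{7,8,9,16,17,18\}$; $(\bar c,\bar t_j)$ for $19\le j\le24$; $(\bar a,\bar t_{25})$; $(\bar y,\bar t_{26})$; $(\bar n_1,\bar t_{25})$. All other demands are unchanged. *)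

(* Defs.v *)
From HB Require Import structures.
From mathcomp Require Import all_boot all_order all_algebra all_field.
Set Implicit Arguments. Unset Strict Implicit. Unset Printing Implicit Defensive.
Import GRing.Theory.
Local Open Scope ring_scope.

(* A network on a finite node type V: edge relation E (an edge is an        *)
(* ordered pair of nodes, no parallel edges), source predicate src, and     *)
(* demand relation dem t x ("terminal t demands the message of source x").  *)
(*   A u v    : coefficient of edge (u,v) out of a source u  (y = A x_u)     *)
(*   C w u v  : coefficient A_{e',e} with e' = (w,u), e = (u,v)              *)
(*   B t x u  : decoding coefficient used by terminal t for demanded         *)
(*              message x on its incoming edge (u,t)                         *)

Definition vlnc_edge_eqs (F : fieldType) (V : finType) (d : nat)
    (E : rel V) (src : pred V)
    (A : V -> V -> 'M[F]_d) (C : V -> V -> V -> 'M[F]_d)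
    (msg : V -> 'cV[F]_d) (y : V -> V -> 'cV[F]_d) : Prop :=
  forall u v, E u v ->
    (src u -> y u v = A u v *m msg u) /\
    (~~ src u -> y u v = \sum_(w | E w u) C w u v *m y w u).

Definition vlnc_decodes (F : fieldType) (V : finType) (d : nat)
    (E : rel V) (dem : rel V)
    (B : V -> V -> V -> 'M[F]_d)
    (msg : V -> 'cV[F]_d) (y : V -> V -> 'cV[F]_d) : Prop :=
  forall t x, dem t x -> \sum_(u | E u t) B t x u *m y u t = msg x.

Definition has_VLNC_solution (F : fieldType) (d : nat) (V : finType)
    (E : rel V) (src : pred V) (dem : rel V) : Prop :=
  exists (A : V -> V -> 'M[F]_d) (C : V -> V -> V -> 'M[F]_d)
         (B : V -> V -> V -> 'M[F]_d),
  forall msg : V -> 'cV[F]_d,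
    (exists y, vlnc_edge_eqs E src A C msg y) /\
    (forall y, vlnc_edge_eqs E src A C msg y -> vlnc_decodes E dem B msg y).

(* The network N_2 with parameter q (= q' of the paper).                     *)
(* Nodes are pairs (kind, index) with 1-based indices as in the paper;     *)
(* unused pairs are isolated, non-source, undemanded nodes (irrelevant).   *)

Definition node (q : nat) := ('I_8 * 'I_(q + 27).+1)%type.

Definition Kx   : 'I_8 := inord 0. (* Char-q-s sources  x̄_i, 2 <= i <= q+2 *)
Definition Km   : 'I_8 := inord 1. (* m̄_i, 1 <= i <= q+3 *)
Definition Kn   : 'I_8 := inord 2. (* n̄_i, 1 <= i <= q+3 *)
Definition Krho : 'I_8 := inord 3. (* terminals ρ_i, 1 <= i <= q+3 *)
Definition Ksrc : 'I_8 := inord 4. (* M_3 sources: 1..9 = a,b,c,r,s,w,x,y,z *)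
Definition Ku   : 'I_8 := inord 5. (* ū_1..ū_3 *)
Definition Kv   : 'I_8 := inord 6. (* v̄_1..v̄_5 *)
Definition Kt   : 'I_8 := inord 7. (* terminals t̄_1..t̄_27 *)

Definition nd (q : nat) (k : 'I_8) (i : nat) : node q := (k, inord i).

(* M_3 sources; group G_1 = (a,b,c), G_2 = (r,s,w), G_3 = (x,y,z). *)
Definition srcM q (j : nat) : node q := nd q Ksrc j.
Definition sa q := srcM q 1.
Definition sc q := srcM q 3.
Definition sw q := srcM q 6.
Definition sx q := srcM q 7.
Definition sy q := srcM q 8.

(* Char-q-s nodes; x_1 is identified with ā and s with x̄. *)
Definition chx q (i : nat) : node q := if i == 1%N then sa q else nd q Kx i.
Definition chs q : node q := sx q.
Definition mm q i := nd q Km i.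
Definition nn q i := nd q Kn i.
Definition rho q i := nd q Krho i.
Definition uu q i := nd q Ku i.
Definition vv q i := nd q Kv i.
Definition tt q i := nd q Kt i.

Definition N2_edges (q : nat) : seq (node q * node q) :=
  [seq (chx q 1, mm q i) | i <- iota 1 (q + 1)] ++
  [:: (chs q, mm q 1)] ++
  [seq (chs q, mm q i) | i <- iota 4 q] ++
  [seq (chx q p.1, mm q p.2) |
     p <- [seq (i, j) | i <- iota 2 (q + 1), j <- iota 2 (q + 1)] & p.1 != p.2] ++
  [seq (chx q i, mm q (q + 3)) | i <- iota 1 (q + 2)] ++
  [seq (mm q i, nn q i) | i <- iota 1 (q + 3)] ++
  [seq (nn q i, rho q i) | i <- iota 1 (q + 2)] ++
  [seq (nn q (q + 3), rho q i) | i <- iota 1 (q + 2)] ++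
  [seq (nn q i, rho q (q + 3)) | i <- iota 1 (q + 2)] ++
  [seq (chx q i, rho q 1) | i <- iota 2 q] ++
  [:: (chx q 1, rho q (q + 2)); (chs q, rho q 2); (chs q, rho q 3)] ++
  [seq (srcM q j, uu q ((j + 2) %/ 3)) | j <- iota 1 9] ++
  [seq (uu q i, vv q i) | i <- iota 1 3] ++
  [seq (uu q i, vv q 4) | i <- iota 1 3] ++
  [seq (uu q i, vv q 5) | i <- iota 1 3] ++
  [seq (vv q p.1, tt q p.2) | p <- [seq (i, j) | i <- iota 1 5, j <- iota 1 27]] ++
  [seq (sw q, tt q j) | j <- [:: 7; 8; 9; 16; 17; 18]%N] ++
  [seq (sc q, tt q j) | j <- iota 19 6] ++
  [:: (sa q, tt q 25); (sy q, tt q 26); (nn q 1, tt q 25)].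

Definition N2_E (q : nat) : rel (node q) := fun u v => (u, v) \in N2_edges q.

Definition N2_sources (q : nat) : seq (node q) :=
  [seq srcM q j | j <- iota 1 9] ++ [seq nd q Kx i | i <- iota 2 (q + 1)].

Definition N2_src (q : nat) : pred (node q) := fun v => v \in N2_sources q.

(* Demands.  ρ_1 demands x̄_{q+2}; ρ_i demands x̄_i (2 <= i <= q+2);         *)
(* ρ_{q+3} demands x_1 = ā; t̄_j demands the j-th triple of G_1 x G_2 x G_3 *)
(* in lexicographic order: for j - 1 = 9 α + 3 β + γ (0 <= α,β,γ <= 2) the *)
(* triple is (G_1[α], G_2[β], G_3[γ]) = sources α+1, β+4, γ+7.              *)
Definition N2_demands (q : nat) : seq (node q * node q) :=
  [:: (rho q 1, chx q (q + 2))] ++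
  [seq (rho q i, chx q i) | i <- iota 2 (q + 1)] ++
  [:: (rho q (q + 3), chx q 1)] ++
  flatten [seq [:: (tt q (9 * p.1.1 + 3 * p.1.2 + p.2 + 1), srcM q (p.1.1 + 1));
                   (tt q (9 * p.1.1 + 3 * p.1.2 + p.2 + 1), srcM q (p.1.2 + 4));
                   (tt q (9 * p.1.1 + 3 * p.1.2 + p.2 + 1), srcM q (p.2 + 7))]
          | p <- [seq (ab, g) | ab <- [seq (a, b) | a <- iota 0 3, b <- iota 0 3],
                                g <- iota 0 3]].

Definition N2_dem (q : nat) : rel (node q) := fun t x => (t, x) \in N2_demands q.

(* Main.v *)
Require Import Defs.
From HB Require Import structures.
From mathcomp Require Import all_boot all_order all_algebra all_field.
From mathcomp Require Import zify.
Set Implicit Arguments. Unset Strict Implicit. Unset Printing Implicit Defensive.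
Import GRing.Theory.


Lemma KxE : Kx = Ordinal (isT : (0 < 8)%N). Proof. by apply/val_inj; rewrite /= inordK. Qed.
Lemma KmE : Km = Ordinal (isT : (1 < 8)%N). Proof. by apply/val_inj; rewrite /= inordK. Qed.
Lemma KnE : Kn = Ordinal (isT : (2 < 8)%N). Proof. by apply/val_inj; rewrite /= inordK. Qed.
Lemma KrhoE : Krho = Ordinal (isT : (3 < 8)%N). Proof. by apply/val_inj; rewrite /= inordK. Qed.
Lemma KsrcE : Ksrc = Ordinal (isT : (4 < 8)%N). Proof. by apply/val_inj; rewrite /= inordK. Qed.
Lemma KuE : Ku = Ordinal (isT : (5 < 8)%N). Proof. by apply/val_inj; rewrite /= inordK. Qed.
Lemma KvE : Kv = Ordinal (isT : (6 < 8)%N). Proof. by apply/val_inj; rewrite /= inordK. Qed.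
Lemma KtE : Kt = Ordinal (isT : (7 < 8)%N). Proof. by apply/val_inj; rewrite /= inordK. Qed.
Definition KE := (KxE, KmE, KnE, KrhoE, KsrcE, KuE, KvE, KtE).

Definition ix q (u : node q) : nat := u.2.

Lemma ix_nd q k i : (i <= q + 27)%N -> ix (nd q k i) = i.
Proof. by move=> hi; rewrite /ix /nd /= inordK // ltnS. Qed.

Lemma ndE q (u : node q) : u = nd q u.1 (ix u).
Proof. by case: u => k i; rewrite /nd /ix /= inord_val. Qed.

Lemma nd_eq q k k' i i' : (i <= q + 27)%N -> (i' <= q + 27)%N ->
  (nd q k i == nd q k' i') = (k == k') && (i == i').
Proof.
move=> hi hi'; rewrite /nd xpair_eqE; congr (_ && _).
by rewrite -val_eqE /= !inordK // ltnS.
Qed.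

Lemma src_kind q (u : node q) : @N2_src q u -> (u.1 == Ksrc) || (u.1 == Kx).
Proof.
rewrite /N2_src /N2_sources mem_cat => /orP [/mapP [j _ ->] | /mapP [i _ ->]];
  by rewrite /= eqxx ?orbT.
Qed.

Lemma src_srcM q j : (1 <= j <= 9)%N -> @N2_src q (srcM q j).
Proof. by move=> hj; rewrite /N2_src /N2_sources mem_cat map_f // mem_iota; lia. Qed.

Lemma src_Kx q i : (2 <= i <= q + 2)%N -> @N2_src q (nd q Kx i).
Proof.
by move=> hi; rewrite /N2_src /N2_sources mem_cat orbC map_f // mem_iota; lia.
Qed.

Lemma nsrc q (u : node q) : (u.1 != Ksrc) -> (u.1 != Kx) -> ~~ @N2_src q u.
Proof. by move=> h1 h2; apply/negP => /src_kind; rewrite (negbTE h1) (negbTE h2). Qed.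

Definition Xp q (w : node q) : bool :=
  (w == sa q) || ((w.1 == Kx) && (2 <= ix w <= q + 2)%N).

Definition Spm q (i : nat) (w : node q) : bool :=
  if i == 1%N then w == sa q
  else if (i <= q + 1)%N then Xp w && (w != nd q Kx i)
  else if i == (q + 2)%N then [&& Xp w, w != sa q & w != nd q Kx (q + 2)]
  else Xp w.

Definition grpset q (g : nat) : {set node q} :=
  [set srcM q (3 * g + nat_of_ord p + 1) | p : 'I_3].
Definition uset q : {set node q} := [set uu q (nat_of_ord g + 1) | g : 'I_3].

Definition ordi (n : nat) : 'I_3 := inord n.
Definition tposn (j g : nat) : nat := ((j - 1) %/ 3 ^ (2 - g)) %% 3.
Definition ccn (k : nat) : nat := if k == 4%N then 1%N else if k == 5%N then 2%N else 0%N.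

Definition Cs q (u v w : node q) : bool :=
  if u.1 == Km then @Spm q (ix u) w
  else if u.1 == Ku then (1 <= ix u <= 3)%N && (w \in grpset q (ix u - 1))
  else if u.1 == Kn then w == mm q (ix u)
  else if u.1 == Kv then (if (ix u <= 3)%N then w == uu q (ix u) else w \in uset q)
  else false.

Definition Cv (F : fieldType) q (u v w : node q) : 'M[F]_3 :=
  if u.1 == Ku then delta_mx (ordi ((ix w - 1) %% 3)) (ordi (ccn (ix v)))
  else if (u.1 == Kv) && (3 < ix u)%N then
    delta_mx (ordi (ix w - 1)) (ordi (tposn (ix v) (ix w - 1)))
  else 1%:M%R.

Definition CC (F : fieldType) q (w u v : node q) : 'M[F]_3 :=
  if Cs u v w then Cv F u v w else 0%R.

Definition Bs q (t x u : node q) : bool :=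
  if t.1 == Krho then
    if ix t == 1%N then [|| u == nn q (q + 3), u == nn q 1
                          | (u.1 == Kx) && (2 <= ix u <= q + 1)%N]
    else if (ix t <= q + 1)%N then (u == nn q (q + 3)) || (u == nn q (ix t))
    else if ix t == (q + 2)%N then [|| u == nn q (q + 3), u == nn q (q + 2) | u == sa q]
    else u == nn q 1
  else if t.1 == Kt then u \in [:: vv q ((ix x - 1) %/ 3 + 1); vv q 4; vv q 5]
  else false.

Definition Bv (F : fieldType) q (t x u : node q) : 'M[F]_3 :=
  if t.1 == Krho then
    (if (u == nn q (q + 3)) || (ix t == q + 3)%N then 1%:M%R else (- 1%:M)%R)
  else if u == vv q 4 then delta_mx (ordi 1) (ordi ((ix x - 1) %/ 3))
  else if u == vv q 5 then delta_mx (ordi 2) (ordi ((ix x - 1) %/ 3))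
  else delta_mx (ordi 0) (ordi ((ix x - 1) %% 3)).

Definition BB (F : fieldType) q (t x u : node q) : 'M[F]_3 :=
  if Bs t x u then Bv F t x u else 0%R.

Definition AA (F : fieldType) q (u v : node q) : 'M[F]_3 := 1%:M%R.

Lemma Xp_src q (w : node q) : Xp w -> @N2_src q w.
Proof.
case/orP => [/eqP -> | /andP [/eqP hk hi]]; first exact: src_srcM.
by rewrite (ndE w) hk; apply: src_Kx.
Qed.

Lemma Spm_Xp q i (w : node q) : @Spm q i w -> Xp w.
Proof.
rewrite /Spm; case: ifP => _; first by move/eqP ->; rewrite /Xp eqxx.
case: ifP => _; first by case/andP.
by case: ifP => _; [case/and3P|].
Qed.

Lemma grpset_src q g (w : node q) : (g < 3)%N -> w \in grpset q g -> @N2_src q w.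
Proof. move=> hg /imsetP [p _ ->]; apply: src_srcM; have hp := ltn_ord p; lia. Qed.

Lemma Cs_lvl1 q (u v w : node q) :
  (u.1 == Km) || (u.1 == Ku) -> Cs u v w -> @N2_src q w.
Proof.
rewrite /Cs; case/orP => /eqP ->; rewrite !KE /=.
  by move/Spm_Xp/Xp_src.
by case/andP => hu; apply: grpset_src; lia.
Qed.

Lemma Cs_lvl2 q (u v w : node q) :
  (u.1 == Kn) || (u.1 == Kv) -> Cs u v w ->
  ~~ @N2_src q w && ((w.1 == Km) || (w.1 == Ku)).
Proof.
rewrite /Cs; case/orP => /eqP ->; rewrite !KE /=.
  by move/eqP ->; rewrite /= nsrc //= !KE.
case: ifP => _; first by move/eqP ->; rewrite /= nsrc //= !KE.
by case/imsetP => g _ ->; rewrite /= nsrc //= !KE.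
Qed.

Lemma Cs_other q (u v w : node q) :
  ~~ [|| u.1 == Km, u.1 == Ku, u.1 == Kn | u.1 == Kv] -> Cs u v w = false.
Proof. by rewrite /Cs; case: (u.1 == Km); case: (u.1 == Ku); case: (u.1 == Kn); case: (u.1 == Kv). Qed.


Definition yy1 (F : fieldType) q (msg : node q -> 'cV[F]_3) (u v : node q) :=
  (\sum_(w | @N2_E q w u) CC F w u v *m msg w)%R.
Definition yy2 (F : fieldType) q (msg : node q -> 'cV[F]_3) (u v : node q) :=
  (\sum_(w | @N2_E q w u) CC F w u v *m yy1 msg w u)%R.
Definition yy (F : fieldType) q (msg : node q -> 'cV[F]_3) (u v : node q) :=
  if @N2_src q u then msg u
  else if (u.1 == Km) || (u.1 == Ku) then yy1 msg u v
  else if (u.1 == Kn) || (u.1 == Kv) then yy2 msg u v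
  else 0%R.

Lemma yy_ok (F : fieldType) q (msg : node q -> 'cV[F]_3) :
  vlnc_edge_eqs (@N2_E q) (@N2_src q) (@AA F q) (@CC F q) msg (yy msg).
Proof.
move=> u v _; split => hs; rewrite [in LHS]/yy; first by rewrite hs /AA mul1mx.
rewrite (negbTE hs).
case: ifP => h1.
  rewrite /yy1; apply: eq_bigr => w _; rewrite /CC; case: ifP => hc; last by rewrite !mul0mx.
  by rewrite /yy (Cs_lvl1 h1 hc).
case: ifP => h2.
  rewrite /yy2; apply: eq_bigr => w _; rewrite /CC; case: ifP => hc; last by rewrite !mul0mx.
  by case/andP: (Cs_lvl2 h2 hc) => /negbTE hn hk; rewrite /yy hn hk.
symmetry; apply: big1 => w _; rewrite /CC Cs_other ?mul0mx //.
by move: h1 h2; case: (u.1 == Km); case: (u.1 == Ku); case: (u.1 == Kn); case: (u.1 == Kv).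
Qed.

Open Scope ring_scope.

Lemma sum_supp (F : fieldType) (T : finType) (P S : pred T)
    (M : T -> 'M[F]_3) (Y : T -> 'cV[F]_3) :
  (forall w, S w -> P w) ->
  \sum_(w | P w) (if S w then M w else 0) *m Y w = \sum_(w | S w) M w *m Y w.
Proof.
move=> hSP; rewrite big_mkcond [RHS]big_mkcond; apply: eq_bigr => w _.
case: ifP => hp; first by case: ifP => _; rewrite ?mul0mx.
by case: ifP => // /hSP; rewrite hp.
Qed.

Lemma y_src (F : fieldType) q msg (y : node q -> node q -> 'cV[F]_3) u v :
  vlnc_edge_eqs (@N2_E q) (@N2_src q) (@AA F q) (@CC F q) msg y ->
  @N2_E q u v -> @N2_src q u -> y u v = msg u.
Proof. by move=> H huv hs; case: (H u v huv) => h _; rewrite h // /AA mul1mx. Qed.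

Lemma y_gen (F : fieldType) q msg (y : node q -> node q -> 'cV[F]_3) u v :
  vlnc_edge_eqs (@N2_E q) (@N2_src q) (@AA F q) (@CC F q) msg y ->
  @N2_E q u v -> ~~ @N2_src q u -> (forall w, Cs u v w -> @N2_E q w u) ->
  y u v = \sum_(w | Cs u v w) Cv F u v w *m y w u.
Proof.
move=> H huv hs hE; case: (H u v huv) => _ h; rewrite h //.
exact: sum_supp.
Qed.


Close Scope ring_scope.

Tactic Notation "partE" int_or_var(n) := rewrite /N2_E /N2_edges !mem_cat; do n (apply/orP; right); apply/orP; left.
Ltac mapx k := apply/mapP; exists k; [rewrite mem_iota; lia | ].

Lemma chxE q k : (k != 1)%N -> chx q k = nd q Kx k.
Proof. by move=> hk; rewrite /chx (negbTE hk). Qed.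

Lemma E_sa_mm q k : (1 <= k <= q + 1)%N -> @N2_E q (sa q) (mm q k).
Proof. by move=> hk; partE 0; mapx k. Qed.

Lemma E_Kx_mm q k i : (2 <= k <= q + 2)%N -> (2 <= i <= q + 2)%N -> k != i ->
  @N2_E q (nd q Kx k) (mm q i).
Proof.
move=> hk hi hki; partE 3; apply/mapP; exists (k, i).
  by rewrite mem_filter hki /=; apply: allpairs_f; rewrite mem_iota; lia.
by rewrite /= chxE //; lia.
Qed.

Lemma E_X_mm3 q w : Xp w -> @N2_E q w (mm q (q + 3)).
Proof.
case/orP => [/eqP -> | /andP [/eqP hk hi]]; first by partE 4; mapx 1%N.
rewrite (ndE w) hk; partE 4; mapx (ix w); rewrite chxE //; lia.
Qed.

Lemma E_mm_nn q k : (1 <= k <= q + 3)%N -> @N2_E q (mm q k) (nn q k).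
Proof. by move=> hk; partE 5; mapx k. Qed.

Lemma E_nn_rho q k : (1 <= k <= q + 2)%N -> @N2_E q (nn q k) (rho q k).
Proof. by move=> hk; partE 6; mapx k. Qed.

Lemma E_nn3_rho q k : (1 <= k <= q + 2)%N -> @N2_E q (nn q (q + 3)) (rho q k).
Proof. by move=> hk; partE 7; mapx k. Qed.

Lemma E_nn_rho3 q k : (1 <= k <= q + 2)%N -> @N2_E q (nn q k) (rho q (q + 3)).
Proof. by move=> hk; partE 8; mapx k. Qed.

Lemma E_Kx_rho1 q k : (2 <= k <= q + 1)%N -> @N2_E q (nd q Kx k) (rho q 1).
Proof. move=> hk; partE 9; mapx k; rewrite chxE //; lia. Qed.

Lemma E_sa_rho q : @N2_E q (sa q) (rho q (q + 2)).
Proof. by partE 10; rewrite inE eqxx. Qed.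

Lemma E_src_uu q g p : (g < 3)%N -> (p < 3)%N ->
  @N2_E q (srcM q (3 * g + p + 1)) (uu q (g + 1)).
Proof.
move=> hg hp; partE 11; mapx (3 * g + p + 1)%N.
by rewrite (_ : ((3 * g + p + 1 + 2) %/ 3 = g + 1)%N) //; lia.
Qed.

Lemma E_uu_vv q g : (1 <= g <= 3)%N -> @N2_E q (uu q g) (vv q g).
Proof. by move=> hk; partE 12; mapx g. Qed.
Lemma E_uu_vv4 q g : (1 <= g <= 3)%N -> @N2_E q (uu q g) (vv q 4).
Proof. by move=> hk; partE 13; mapx g. Qed.
Lemma E_uu_vv5 q g : (1 <= g <= 3)%N -> @N2_E q (uu q g) (vv q 5).
Proof. by move=> hk; partE 14; mapx g. Qed.

Lemma E_vv_tt q k j : (1 <= k <= 5)%N -> (1 <= j <= 27)%N -> @N2_E q (vv q k) (tt q j).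
Proof.
move=> hk hj; partE 15; apply/mapP; exists (k, j) => //.
by apply: allpairs_f; rewrite mem_iota; lia.
Qed.

Lemma Spm_E q k (w : node q) : (1 <= k <= q + 3)%N -> @Spm q k w -> @N2_E q w (mm q k).
Proof.
move=> hk; rewrite /Spm; case: ifP => [/eqP -> /eqP -> | h1]; first by apply: E_sa_mm; lia.
case: ifP => h2.
  case/andP => /orP [/eqP -> _ | /andP [/eqP hw hr]]; first by apply: E_sa_mm; lia.
  rewrite (ndE w) hw nd_eq; try lia.
  by rewrite eqxx /= => hne; apply: E_Kx_mm => //; lia.
case: ifP => h3.
  case/and3P => /orP [/eqP -> | /andP [/eqP hw hr]]; first by rewrite eqxx.
  rewrite (ndE w) hw nd_eq ?eqxx /=; try lia.
  by move=> _ hne; rewrite (eqP h3); apply: E_Kx_mm => //; lia.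
have -> : k = (q + 3)%N by move: h1 h2 h3; lia.
exact: E_X_mm3.
Qed.

Lemma Cs_nn q k (r w : node q) : (k <= q + 27)%N -> Cs (nn q k) r w = (w == mm q k).
Proof. by move=> hk; rewrite /Cs /= !KE /= ix_nd. Qed.
Lemma Cs_mm q k (r w : node q) : (k <= q + 27)%N -> Cs (mm q k) r w = @Spm q k w.
Proof. by move=> hk; rewrite /Cs /= !KE /= ix_nd. Qed.
Lemma Cs_uu q g (r w : node q) : (1 <= g <= 3)%N -> Cs (uu q g) r w = (w \in grpset q (g - 1)).
Proof. by move=> hk; rewrite /Cs /= !KE /= ix_nd ?hk //; lia. Qed.
Lemma Cs_vv q k (r w : node q) : (k <= 3)%N -> Cs (vv q k) r w = (w == uu q k).
Proof. by move=> hk; rewrite /Cs /= !KE /= ix_nd ?hk //; lia. Qed.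
Lemma Cs_vv45 q k (r w : node q) : (3 < k <= 5)%N -> Cs (vv q k) r w = (w \in uset q).
Proof. by move=> hk; rewrite /Cs /= !KE /= ix_nd ?ifN //; lia. Qed.

Lemma Cv_nn (F : fieldType) q k (r w : node q) : Cv F (nn q k) r w = 1%:M%R.
Proof. by rewrite /Cv /= !KE. Qed.
Lemma Cv_mm (F : fieldType) q k (r w : node q) : Cv F (mm q k) r w = 1%:M%R.
Proof. by rewrite /Cv /= !KE. Qed.
Lemma Cv_uu (F : fieldType) q g (r w : node q) :
  Cv F (uu q g) r w = delta_mx (ordi ((ix w - 1) %% 3)) (ordi (ccn (ix r))).
Proof. by rewrite /Cv /= !KE. Qed.
Lemma Cv_vv (F : fieldType) q k (r w : node q) : (k <= 3)%N -> Cv F (vv q k) r w = 1%:M%R.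
Proof. by move=> hk; rewrite /Cv /= !KE /= ix_nd ?ltnNge ?hk //; lia. Qed.
Lemma Cv_vv45 (F : fieldType) q k (r w : node q) : (3 < k <= 5)%N ->
  Cv F (vv q k) r w = delta_mx (ordi (ix w - 1)) (ordi (tposn (ix r) (ix w - 1))).
Proof. by move=> hk; rewrite /Cv /= !KE /= ix_nd ?ifT //; lia. Qed.

Lemma nsrc_kind q (u : node q) : [|| u.1 == Km, u.1 == Kn, u.1 == Ku | u.1 == Kv] ->
  ~~ @N2_src q u.
Proof.
by move=> h; apply: nsrc; case/or4P: h => /eqP ->; rewrite !KE.
Qed.

Open Scope ring_scope.

Lemma y_mm (F : fieldType) q msg (y : node q -> node q -> 'cV[F]_3) k :
  vlnc_edge_eqs (@N2_E q) (@N2_src q) (@AA F q) (@CC F q) msg y ->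
  (1 <= k <= q + 3)%N ->
  y (mm q k) (nn q k) = \sum_(w | @Spm q k w) msg w.
Proof.
move=> H hk.
rewrite (y_gen H (E_mm_nn hk)); first last.
- by move=> w; rewrite Cs_mm; [apply: Spm_E | lia].
- by apply: nsrc_kind; rewrite /= !KE.
rewrite (eq_bigl _ _ (fun w => Cs_mm _ _ _)); last lia.
apply: eq_bigr => w hw; rewrite Cv_mm mul1mx.
apply: (y_src H (Spm_E hk hw)); exact/Xp_src/Spm_Xp/hw.
Qed.

Lemma y_nn (F : fieldType) q msg (y : node q -> node q -> 'cV[F]_3) k r :
  vlnc_edge_eqs (@N2_E q) (@N2_src q) (@AA F q) (@CC F q) msg y ->
  (1 <= k <= q + 3)%N -> @N2_E q (nn q k) r ->
  y (nn q k) r = \sum_(w | @Spm q k w) msg w.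
Proof.
move=> H hk hE.
rewrite (y_gen H hE); first last.
- by move=> w; rewrite Cs_nn; [move/eqP ->; apply: E_mm_nn | lia].
- by apply: nsrc_kind; rewrite /= !KE.
rewrite (eq_bigl _ _ (fun w => Cs_nn _ _ _)); last lia.
by rewrite big_pred1_eq Cv_nn mul1mx (y_mm H hk).
Qed.

Close Scope ring_scope.

Lemma Spm_1 q (w : node q) : @Spm q 1 w = (w == sa q).
Proof. by []. Qed.
Lemma Spm_mid q i (w : node q) : (2 <= i <= q + 1)%N -> @Spm q i w = Xp w && (w != nd q Kx i).
Proof. by move=> hi; rewrite /Spm; case: ifP => h1; [lia|]; case: ifP => h2; [|lia]. Qed.
Lemma Spm_q2 q (w : node q) : @Spm q (q + 2) w = [&& Xp w, w != sa q & w != nd q Kx (q + 2)].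
Proof. by rewrite /Spm; case: ifP => h1; [lia|]; case: ifP => h2; [lia|]; rewrite eqxx. Qed.
Lemma Spm_q3 q (w : node q) : @Spm q (q + 3) w = Xp w.
Proof. rewrite /Spm; case: ifP => h1; [lia|]; case: ifP => h2; [lia|]; case: ifP => h3 //; lia. Qed.

Lemma Xp_Kx q i : (2 <= i <= q + 2)%N -> Xp (nd q Kx i).
Proof. by move=> hi; rewrite /Xp /= ix_nd ?hi ?eqxx ?orbT //; lia. Qed.
Lemma Xp_sa q : Xp (sa q).
Proof. by rewrite /Xp eqxx. Qed.
Lemma sa_Kx q i : (sa q == nd q Kx i) = false.
Proof. by rewrite /sa /srcM /nd xpair_eqE !KE. Qed.

Lemma Bs_rho q i (x u : node q) : (i <= q + 27)%N ->
  Bs (rho q i) x u =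
    if i == 1%N then [|| u == nn q (q + 3), u == nn q 1
                          | (u.1 == Kx) && (2 <= ix u <= q + 1)%N]
    else if (i <= q + 1)%N then (u == nn q (q + 3)) || (u == nn q i)
    else if i == (q + 2)%N then [|| u == nn q (q + 3), u == nn q (q + 2) | u == sa q]
    else u == nn q 1.
Proof. by move=> hi; rewrite /Bs /= !KE /= ix_nd. Qed.

Lemma Bs_rho_mid q i (x u : node q) : (2 <= i <= q + 1)%N ->
  Bs (rho q i) x u = (u == nn q (q + 3)) || (u == nn q i).
Proof. by move=> hi; rewrite Bs_rho; [case: ifP => h1; [lia|]; case: ifP => h2; [|lia] | lia]. Qed.

Lemma Bv_rho (F : fieldType) q i (x u : node q) : (i <= q + 27)%N ->
  Bv F (rho q i) x u = if (u == nn q (q + 3)) || (i == q + 3) then 1%:M%R else (- 1%:M)%R.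
Proof. by move=> hi; rewrite /Bv /= !KE /= ix_nd. Qed.

Lemma nn_eq q i j : (i <= q + 27)%N -> (j <= q + 27)%N -> (nn q i == nn q j) = (i == j).
Proof. by move=> hi hj; rewrite /nn nd_eq // eqxx. Qed.

Open Scope ring_scope.

Lemma dec_rho_mid (F : fieldType) q msg (y : node q -> node q -> 'cV[F]_3) i x :
  vlnc_edge_eqs (@N2_E q) (@N2_src q) (@AA F q) (@CC F q) msg y ->
  (2 <= i <= q + 1)%N ->
  \sum_(u | @N2_E q u (rho q i)) BB F (rho q i) x u *m y u (rho q i) = msg (nd q Kx i).
Proof.
move=> H hi.
rewrite /BB sum_supp; last first.
  move=> u; rewrite Bs_rho_mid //.
  by case/orP => /eqP ->; [apply: E_nn3_rho | apply: E_nn_rho]; lia.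
rewrite (eq_bigl _ _ (fun u => Bs_rho_mid _ _ hi)).
rewrite (bigD1 (nn q (q + 3))) ?eqxx //=.
rewrite (eq_bigl (fun u => u == nn q i)); last first.
  move=> u; case: (eqVneq u (nn q i)) => [-> | hne]; last by rewrite orbF andbN.
  by rewrite orbT andTb nn_eq; lia.
rewrite big_pred1_eq !Bv_rho; try lia.
have hne : (i == q + 3)%N = false by lia.
rewrite eqxx /= nn_eq ?hne /=; try lia.
rewrite mul1mx mulNmx mul1mx.
rewrite (y_nn H _ (E_nn3_rho _)); try lia.
rewrite (y_nn H _ (E_nn_rho _)); try lia.
rewrite (eq_bigl _ _ (fun w => Spm_q3 w)).
rewrite (eq_bigl _ _ (fun w => Spm_mid w hi)).
rewrite (bigD1 (nd q Kx i)) /=; last by apply: Xp_Kx; lia.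
by rewrite addrK.
Qed.

Close Scope ring_scope.
Lemma ix_le q (w : node q) : (ix w <= q + 27)%N.
Proof. by rewrite /ix -ltnS ltn_ord. Qed.

Lemma Bs_rho1 q (x u : node q) :
  Bs (rho q 1) x u = [|| u == nn q (q + 3), u == nn q 1 | (u.1 == Kx) && (2 <= ix u <= q + 1)%N].
Proof. by rewrite Bs_rho //; lia. Qed.
Lemma Bs_rho2 q (x u : node q) :
  Bs (rho q (q + 2)) x u = [|| u == nn q (q + 3), u == nn q (q + 2) | u == sa q].
Proof. by rewrite Bs_rho; [case: ifP => h1; [lia|]; case: ifP => h2; [lia|]; rewrite eqxx | lia]. Qed.
Lemma Bs_rho3 q (x u : node q) : Bs (rho q (q + 3)) x u = (u == nn q 1).
Proof.
rewrite Bs_rho; [case: ifP => h1; [lia|]; case: ifP => h2; [lia|]; case: ifP => h3 // | ]; lia.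
Qed.

Lemma Xp_split q (w : node q) :
  [&& Xp w, w != sa q & w != nd q Kx (q + 2)] = (w.1 == Kx) && (2 <= ix w <= q + 1)%N.
Proof.
rewrite /Xp; case: (eqVneq w (sa q)) => [-> | hs] /=; first by rewrite !KE.
case hk: (w.1 == Kx) => //=.
rewrite [w in w != _](ndE w) (eqP hk) nd_eq ?ix_le //; last lia.
rewrite eqxx /=; apply/idP/idP; lia.
Qed.

Open Scope ring_scope.

Lemma Xp_sum (F : fieldType) q (f : node q -> 'cV[F]_3) :
  \sum_(w | Xp w) f w = f (sa q) + (f (nd q Kx (q + 2)) +
     \sum_(w | [&& Xp w, w != sa q & w != nd q Kx (q + 2)]) f w).
Proof.
rewrite (bigD1 (sa q)) ?Xp_sa //=; congr (_ + _).
rewrite (bigD1 (nd q Kx (q + 2))) /=; last by rewrite Xp_Kx; [rewrite eq_sym sa_Kx | lia].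
by congr (_ + _); apply: eq_bigl => w; rewrite andbA.
Qed.

Lemma dec_rho1 (F : fieldType) q msg (y : node q -> node q -> 'cV[F]_3) x :
  vlnc_edge_eqs (@N2_E q) (@N2_src q) (@AA F q) (@CC F q) msg y ->
  \sum_(u | @N2_E q u (rho q 1)) BB F (rho q 1) x u *m y u (rho q 1) = msg (nd q Kx (q + 2)).
Proof.
move=> H.
rewrite /BB sum_supp; last first.
  move=> u; rewrite Bs_rho1; case/or3P => [/eqP -> | /eqP -> | /andP [/eqP hk hr]].
  - by apply: E_nn3_rho; lia.
  - by apply: E_nn_rho; lia.
  by rewrite (ndE u) hk; apply: E_Kx_rho1.
rewrite (eq_bigl _ _ (fun u => Bs_rho1 _ _)).
rewrite (bigD1 (nn q (q + 3))) ?eqxx //=.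
rewrite (bigD1 (nn q 1)) /=; last by rewrite eqxx orbT nn_eq //; lia.
rewrite (eq_bigl (fun u => (u.1 == Kx) && (2 <= ix u <= q + 1)%N)); last first.
  move=> u; case: (eqVneq u (nn q (q + 3))) => [-> | h1] /=; first by rewrite !KE.
  by case: (eqVneq u (nn q 1)) => [-> | h2] /=; [rewrite !KE | rewrite !andbT].
rewrite !Bv_rho; try lia.
rewrite eqxx /= nn_eq //; try lia.
have h13 : (1 == q + 3)%N = false by lia.
rewrite h13 /= mul1mx mulNmx mul1mx.
rewrite (y_nn H _ (E_nn3_rho _)); try lia.
rewrite (y_nn H _ (E_nn_rho _)); try lia.
rewrite (eq_bigl _ _ (fun w => Spm_q3 w)) (eq_bigl _ _ (@Spm_1 q)) big_pred1_eq.
have -> : \sum_(u | (u.1 == Kx) && (2 <= ix u <= q + 1)%N) Bv F (rho q 1) x u *m y u (rho q 1)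
    = - \sum_(u | (u.1 == Kx) && (2 <= ix u <= q + 1)%N) msg u.
  rewrite -sumrN; apply: eq_bigr.
  move=> u /and3P [/eqP hk hr1 hr2]; rewrite Bv_rho; last lia.
  have hu : u = nd q Kx (ix u) by rewrite [LHS]ndE hk.
  rewrite (_ : (u == nn q (q + 3)) = false); last by rewrite hu /nn nd_eq; [rewrite !KE | exact: ix_le | lia].
  rewrite /= h13.
  rewrite mulNmx mul1mx; congr (- _).
  rewrite hu (y_src H (E_Kx_rho1 _)) //; last first.
    by apply: src_Kx; lia.
  by rewrite hr1 hr2.
rewrite Xp_sum (eq_bigl _ _ (@Xp_split q)).
by rewrite -opprD addrCA addrK.
Qed.

Lemma dec_rho2 (F : fieldType) q msg (y : node q -> node q -> 'cV[F]_3) x :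
  vlnc_edge_eqs (@N2_E q) (@N2_src q) (@AA F q) (@CC F q) msg y ->
  \sum_(u | @N2_E q u (rho q (q + 2))) BB F (rho q (q + 2)) x u *m y u (rho q (q + 2))
    = msg (nd q Kx (q + 2)).
Proof.
move=> H.
rewrite /BB sum_supp; last first.
  move=> u; rewrite Bs_rho2; case/or3P => /eqP ->.
  - by apply: E_nn3_rho; lia.
  - by apply: E_nn_rho; lia.
  exact: E_sa_rho.
rewrite (eq_bigl _ _ (fun u => Bs_rho2 _ _)).
rewrite (bigD1 (nn q (q + 3))) ?eqxx //=.
rewrite (bigD1 (nn q (q + 2))) /=; last by rewrite eqxx orbT nn_eq //; lia.
rewrite (eq_bigl (fun u => u == sa q)); last first.
  move=> u; case: (eqVneq u (nn q (q + 3))) => [-> | h1] /=; first by rewrite /sa /srcM /nd !xpair_eqE !KE.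
  case: (eqVneq u (nn q (q + 2))) => [-> | h2] /=; first by rewrite /sa /srcM /nd !xpair_eqE !KE.
  by rewrite !andbT.
rewrite big_pred1_eq !Bv_rho; try lia.
have h1 : (q + 2 == q + 3)%N = false by lia.
rewrite eqxx /= nn_eq // ?h1 /=; try lia.
rewrite (_ : (sa q == nn q (q + 3)) = false); last by rewrite /sa /srcM /nd !xpair_eqE !KE.
rewrite /= mul1mx !mulNmx !mul1mx.
rewrite (y_nn H _ (E_nn3_rho _)); try lia.
rewrite (y_nn H _ (E_nn_rho _)); try lia.
rewrite (y_src H (E_sa_rho q)); last by apply: src_srcM.
rewrite (eq_bigl _ _ (fun w => Spm_q3 w)) (eq_bigl _ _ (@Spm_q2 q)) Xp_sum.
set s := \sum_(w | _) msg w.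
by rewrite -opprD (addrC s) addrCA addrK.
Qed.

Lemma dec_rho3 (F : fieldType) q msg (y : node q -> node q -> 'cV[F]_3) x :
  vlnc_edge_eqs (@N2_E q) (@N2_src q) (@AA F q) (@CC F q) msg y ->
  \sum_(u | @N2_E q u (rho q (q + 3))) BB F (rho q (q + 3)) x u *m y u (rho q (q + 3))
    = msg (sa q).
Proof.
move=> H.
rewrite /BB sum_supp; last first.
  by move=> u; rewrite Bs_rho3 => /eqP ->; apply: E_nn_rho3; lia.
rewrite (eq_bigl _ _ (fun u => Bs_rho3 _ _)) big_pred1_eq Bv_rho; last lia.
rewrite eqxx orbT mul1mx (y_nn H _ (E_nn_rho3 _)); try lia.
by rewrite (eq_bigl _ _ (@Spm_1 q)) big_pred1_eq.
Qed.

Lemma ordiK (p : 'I_3) : ordi p = p.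
Proof. exact: inord_val. Qed.
Lemma ordi0 : ordi 0 = Ordinal (isT : (0 < 3)%N). Proof. by apply/val_inj; rewrite /= inordK. Qed.
Lemma ordi1 : ordi 1 = Ordinal (isT : (1 < 3)%N). Proof. by apply/val_inj; rewrite /= inordK. Qed.
Lemma ordi2 : ordi 2 = Ordinal (isT : (2 < 3)%N). Proof. by apply/val_inj; rewrite /= inordK. Qed.

Lemma delta_sum (F : fieldType) (a b : 'I_3) (c : 'I_3 -> 'I_3) (f : 'I_3 -> 'cV[F]_3) :
  delta_mx a b *m \sum_i (delta_mx i (c i) *m f i) = delta_mx a (c b) *m f b.
Proof.
rewrite mulmx_sumr (bigD1 b) //= big1 ?addr0; first by rewrite mulmxA mul_delta_mx.
by move=> i hi; rewrite mulmxA mul_delta_mx_cond eq_sym (negbTE hi) mulr0n mul0mx.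
Qed.

Lemma sum_delta3 (F : fieldType) :
  delta_mx (ordi 0) (ordi 0) + (delta_mx (ordi 1) (ordi 1) + delta_mx (ordi 2) (ordi 2))
  = 1%:M :> 'M[F]_3.
Proof.
rewrite ordi0 ordi1 ordi2; apply/matrixP => i j; rewrite !mxE.
by case: i => [[|[|[|i]]] hi] //; case: j => [[|[|[|j]]] hj] //=; rewrite ?addr0 ?add0r.
Qed.

Lemma srcM_inj q (g : nat) (A : {pred 'I_3}) : (g < 3)%N ->
  {in A &, injective (fun p : 'I_3 => srcM q (3 * g + p + 1))}.
Proof.
move=> hg p p' _ _ /eqP; rewrite /srcM nd_eq; try (have := ltn_ord p; have := ltn_ord p'; lia).
case/andP => _ /eqP h; apply/val_inj; rewrite /=; lia.
Qed.

Lemma uu_inj q (A : {pred 'I_3}) : {in A &, injective (fun g : 'I_3 => uu q (g + 1))}.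
Proof.
move=> p p' _ _ /eqP; rewrite /uu nd_eq; try (have := ltn_ord p; have := ltn_ord p'; lia).
case/andP => _ /eqP h; apply/val_inj; rewrite /=; lia.
Qed.

Lemma y_uu (F : fieldType) q msg (y : node q -> node q -> 'cV[F]_3) (g : 'I_3) k :
  vlnc_edge_eqs (@N2_E q) (@N2_src q) (@AA F q) (@CC F q) msg y ->
  (k <= 27)%N -> @N2_E q (uu q (g + 1)) (vv q k) ->
  y (uu q (g + 1)) (vv q k) =
    \sum_(p : 'I_3) delta_mx p (ordi (ccn k)) *m msg (srcM q (3 * g + p + 1)).
Proof.
move=> H hk hE; have hg := ltn_ord g.
rewrite (y_gen H hE); first last.
- move=> w; rewrite Cs_uu; last lia.
  rewrite (_ : (g + 1 - 1 = g)%N); last lia.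
  by case/imsetP => p _ ->; apply: E_src_uu.
- by apply: nsrc_kind; rewrite /= !KE.
rewrite (eq_bigl _ _ (fun w => Cs_uu _ _ _)); last lia.
rewrite (_ : (g + 1 - 1 = g)%N); last lia.
rewrite /grpset big_imset /=; last exact: srcM_inj.
apply: eq_bigr => p _.
have hp := ltn_ord p.
rewrite Cv_uu ix_nd; last lia.
rewrite ix_nd; last lia.
rewrite (_ : ((3 * g + p + 1 - 1) %% 3 = p)%N); last lia.
rewrite ordiK (y_src H (E_src_uu _ hg hp)) //.
by apply: src_srcM; lia.
Qed.

Lemma y_vvlow (F : fieldType) q msg (y : node q -> node q -> 'cV[F]_3) (g : 'I_3) r :
  vlnc_edge_eqs (@N2_E q) (@N2_src q) (@AA F q) (@CC F q) msg y ->
  @N2_E q (vv q (g + 1)) r ->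
  y (vv q (g + 1)) r = y (uu q (g + 1)) (vv q (g + 1)).
Proof.
move=> H hE; have hg := ltn_ord g.
rewrite (y_gen H hE); first last.
- by move=> w; rewrite Cs_vv; [move/eqP ->; apply: E_uu_vv | ]; lia.
- by apply: nsrc_kind; rewrite /= !KE.
rewrite (eq_bigl _ _ (fun w => Cs_vv _ _ _)); last lia.
by rewrite big_pred1_eq Cv_vv ?mul1mx //; lia.
Qed.

Lemma y_vv45 (F : fieldType) q msg (y : node q -> node q -> 'cV[F]_3) k j :
  vlnc_edge_eqs (@N2_E q) (@N2_src q) (@AA F q) (@CC F q) msg y ->
  (3 < k <= 5)%N -> (j <= 27)%N -> @N2_E q (vv q k) (tt q j) ->
  y (vv q k) (tt q j) =
    \sum_(g : 'I_3) delta_mx g (ordi (tposn j g)) *m y (uu q (g + 1)) (vv q k).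
Proof.
move=> H hk hj hE.
rewrite (y_gen H hE); first last.
- move=> w; rewrite Cs_vv45 //; case/imsetP => g _ ->.
  have hg := ltn_ord g.
  have [->|->] : k = 4%N \/ k = 5%N by lia.
    by apply: E_uu_vv4; lia.
  by apply: E_uu_vv5; lia.
- by apply: nsrc_kind; rewrite /= !KE.
rewrite (eq_bigl _ _ (fun w => Cs_vv45 _ _ hk)).
rewrite /uset big_imset /=; last exact: uu_inj.
apply: eq_bigr => g _; have hg := ltn_ord g.
rewrite Cv_vv45 // !ix_nd; try lia.
by rewrite (_ : (g + 1 - 1 = g)%N) ?ordiK //; lia.
Qed.

Open Scope ring_scope.
Lemma KtKrho : (Kt == Krho) = false. Proof. by rewrite !KE. Qed.
Lemma vv_eq q i j : (i <= q + 27)%N -> (j <= q + 27)%N -> (vv q i == vv q j) = (i == j).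
Proof. by move=> hi hj; rewrite /vv nd_eq // eqxx. Qed.
Lemma Bv_tt4 (F : fieldType) q j (x : node q) :
  Bv F (tt q j) x (vv q 4) = delta_mx (ordi 1) (ordi ((ix x - 1) %/ 3)%N).
Proof. by rewrite /Bv [(tt q j).1]/= KtKrho eqxx. Qed.
Lemma Bv_tt5 (F : fieldType) q j (x : node q) :
  Bv F (tt q j) x (vv q 5) = delta_mx (ordi 2) (ordi ((ix x - 1) %/ 3)%N).
Proof. by rewrite /Bv [(tt q j).1]/= KtKrho vv_eq ?eqxx //; lia. Qed.
Lemma Bv_tt0 (F : fieldType) q j (x : node q) (g : 'I_3) :
  Bv F (tt q j) x (vv q (g + 1)) = delta_mx (ordi 0) (ordi ((ix x - 1) %% 3)%N).
Proof.
have hg := ltn_ord g.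
rewrite /Bv [(tt q j).1]/= KtKrho !vv_eq; try lia.
have h4 : (g + 1 == 4)%N = false by lia.
have h5 : (g + 1 == 5)%N = false by lia.
by rewrite h4 h5.
Qed.
Lemma Bs_tt q j (x u : node q) :
  Bs (tt q j) x u = (u \in [:: vv q ((ix x - 1) %/ 3 + 1)%N; vv q 4; vv q 5]).
Proof. by rewrite /Bs [(tt q j).1]/= KtKrho eqxx. Qed.

Lemma ccn_low (g : 'I_3) : ccn (g + 1) = 0%N.
Proof. have hg := ltn_ord g; rewrite /ccn; case: ifP => h1; [lia|]; case: ifP => h2 //; lia. Qed.

Lemma dec_t (F : fieldType) q msg (y : node q -> node q -> 'cV[F]_3) j (g p : 'I_3) :
  vlnc_edge_eqs (@N2_E q) (@N2_src q) (@AA F q) (@CC F q) msg y ->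
  (1 <= j <= 27)%N -> tposn j g = p ->
  \sum_(u | @N2_E q u (tt q j)) BB F (tt q j) (srcM q (3 * g + p + 1)) u *m y u (tt q j)
    = msg (srcM q (3 * g + p + 1)).
Proof.
move=> H hj hpos; have hg := ltn_ord g; have hp := ltn_ord p.
set x := srcM q (3 * g + p + 1).
have hix : ix x = (3 * g + p + 1)%N by rewrite /x ix_nd //; lia.
have hdiv : ((ix x - 1) %/ 3 = g)%N by rewrite hix; lia.
have hmod : ((ix x - 1) %% 3 = p)%N by rewrite hix; lia.
rewrite /BB sum_supp; last first.
  move=> u; rewrite Bs_tt hdiv !inE; case/or3P => /eqP ->; apply: E_vv_tt; lia.
rewrite (eq_bigl _ _ (fun u => Bs_tt _ _ _)) hdiv -big_uniq; last first.
  have h4 : (g + 1 == 4)%N = false by lia.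
  have h5 : (g + 1 == 5)%N = false by lia.
  by rewrite /= !inE !vv_eq ?h4 ?h5 //; lia.
rewrite !big_cons big_nil /= addr0.
rewrite Bv_tt0 Bv_tt4 Bv_tt5 hdiv hmod !ordiK.
rewrite (y_vvlow H (E_vv_tt q _ hj)); try lia.
rewrite (y_uu H); [| lia | apply: E_uu_vv; lia].
rewrite ccn_low delta_sum.
have E45 : forall k, (3 < k <= 5)%N -> forall g' : 'I_3,
    y (uu q (g' + 1)) (vv q k) =
    \sum_(p0 : 'I_3) delta_mx p0 (ordi (ccn k)) *m msg (srcM q (3 * g' + p0 + 1)).
  move=> k hk g'; have hg' := ltn_ord g'; apply: (y_uu H); first lia.
  have [->|->] : k = 4%N \/ k = 5%N by lia.
    by apply: E_uu_vv4; lia.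
  by apply: E_uu_vv5; lia.
rewrite !(y_vv45 H _ _ (E_vv_tt q _ hj)); try lia.
rewrite !delta_sum !E45 // hpos ordiK !delta_sum /ccn /=.
by rewrite -!mulmxDl sum_delta3 mul1mx.
Qed.

Lemma dec_abc (F : fieldType) q msg (y : node q -> node q -> 'cV[F]_3) (a b c : nat) x :
  vlnc_edge_eqs (@N2_E q) (@N2_src q) (@AA F q) (@CC F q) msg y ->
  (a < 3)%N -> (b < 3)%N -> (c < 3)%N ->
  x \in [:: srcM q (a + 1); srcM q (b + 4); srcM q (c + 7)] ->
  \sum_(u | @N2_E q u (tt q (9 * a + 3 * b + c + 1))) BB F (tt q (9 * a + 3 * b + c + 1)) x u
     *m y u (tt q (9 * a + 3 * b + c + 1)) = msg x.
Proof.
move=> H ha hb hc; rewrite !inE; case/or3P => /eqP ->.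
- have -> : srcM q (a + 1) = srcM q (3 * (@Ordinal 3 0 isT) + (@Ordinal 3 a ha) + 1).
    by congr (srcM q _); rewrite /=; lia.
  apply: dec_t => //; first lia.
  rewrite /tposn (_ : (3 ^ (2 - 0) = 9)%N) // (_ : (9 * a + 3 * b + c + 1 - 1 = a * 9 + (3 * b + c))%N); last lia.
  rewrite divnMDl // divn_small ?addn0 ?modn_small //; lia.
- have -> : srcM q (b + 4) = srcM q (3 * (@Ordinal 3 1 isT) + (@Ordinal 3 b hb) + 1).
    by congr (srcM q _); rewrite /=; lia.
  apply: dec_t => //; first lia.
  rewrite /tposn (_ : (3 ^ (2 - 1) = 3)%N) // (_ : (9 * a + 3 * b + c + 1 - 1 = (3 * a + b) * 3 + c)%N); last lia.
  rewrite divnMDl // divn_small ?addn0 // (_ : (3 * a + b = a * 3 + b)%N); last lia.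
  rewrite modnMDl modn_small //.
- have -> : srcM q (c + 7) = srcM q (3 * (@Ordinal 3 2 isT) + (@Ordinal 3 c hc) + 1).
    by congr (srcM q _); rewrite /=; lia.
  apply: dec_t => //; first lia.
  rewrite /tposn (_ : (3 ^ (2 - 2) = 1)%N) // divn1 (_ : (9 * a + 3 * b + c + 1 - 1 = (3 * a + b) * 3 + c)%N); last lia.
  by rewrite modnMDl modn_small.
Qed.

Lemma dec_rho_i (F : fieldType) q msg (y : node q -> node q -> 'cV[F]_3) (i : nat) :
  vlnc_edge_eqs (@N2_E q) (@N2_src q) (@AA F q) (@CC F q) msg y ->
  (2 <= i < 2 + (q + 1))%N ->
  \sum_(u | @N2_E q u (rho q i)) BB F (rho q i) (chx q i) u *m y u (rho q i) = msg (chx q i).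
Proof.
move=> H hi; rewrite chxE; last lia.
have [hi2 | hi2] := leqP i (q + 1).
  by apply: (dec_rho_mid _ H); lia.
have -> : i = (q + 2)%N by lia.
exact: dec_rho2.
Qed.

Close Scope ring_scope.

Theorem lemma10 (q : nat) (hq : (2 <= q)%N) (F : finFieldType) :
  has_VLNC_solution F 3 (@N2_E q) (@N2_src q) (@N2_dem q).
Proof.
exists (@AA F q), (@CC F q), (@BB F q) => msg; split.
  by exists (yy msg); apply: yy_ok.
move=> y H t x; rewrite /N2_dem /N2_demands 3!mem_cat.
case/or4P.
- rewrite inE xpair_eqE => /andP [/eqP -> /eqP ->].
  rewrite chxE; last lia.
  exact: dec_rho1.
- case/mapP => i; rewrite mem_iota => hi [-> ->].
  exact: dec_rho_i.
- rewrite inE xpair_eqE => /andP [/eqP -> /eqP ->].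
  exact: dec_rho3.
case/flatten_mapP => p hp.
move: hp => /allpairsP [[ab c'] [hab hc ->]].
move: hab => /allpairsP [[a0 b0] [ha hb ->]].
rewrite !mem_iota /= in ha hb hc.
rewrite /= !inE => hd.
have [ht hx] : t = tt q (9 * a0 + 3 * b0 + c' + 1) /\
    x \in [:: srcM q (a0 + 1); srcM q (b0 + 4); srcM q (c' + 7)].
  by case/or3P: hd; rewrite xpair_eqE => /andP [/eqP -> /eqP ->]; rewrite !inE eqxx ?orbT.
rewrite ht; apply: dec_abc => //; lia.
Qed.
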